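(* Let $\mathcal{G}=(\mathcal{N},\mathcal{E})$ be a connected graph with $N$ nodes and $E$ edges, let $A\in\mathbb{R}^{E\times N}$ be its edge-node incidence matrix, and let $x\in\mathbb{R}^E$ be an arbitrary vector of line reactances (entries are not required to be positive). Let $p\in\mathbb{R}^N$ satisfy $\mathbf{1}^\top p=0$, and fix a reference node $r\in\mathcal{N}$ and a reference angle $\theta_r\in\mathbb{R}$. Consider the DC power flow equations $$A^\top f = p,\qquad \operatorname{diag}(x)\, f = A\theta,$$ in the unknowns $f\in\mathbb{R}^E$ and $\theta\in\mathbb{R}^N$, where the $r$-th entry of $\theta$ is required to equal $\theta_r$. Then these equations have a unique solution $(f,\theta)$ if and only if one of the following holds: (1) the graph is radial (has no cycles, so $E=N-1$); or (2) the graph is meshed (contains a cycle) and the $C\times C$ matrix $\mathbf{N}^\top\operatorname{diag}(x)\mathbf{N}$ is invertible, where $\mathbf{N}$ is the cycle matrix defined in the context.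
   Context: Incidence matrix: after assigning an arbitrary direction $e=(m,n)$ to each edge, $A_{e,k}=+1$ if $k=m$, $A_{e,k}=-1$ if $k=n$, and $A_{e,k}=0$ otherwise. For a connected graph $A\mathbf{1}=\mathbf{0}$ and $\operatorname{rank}(A)=N-1$. $\operatorname{diag}(x)$ is the diagonal matrix with diagonal $x$. Cycle matrix: a cycle is a closed sequence of adjacent edges; for a cycle $\mathcal{C}$ with a chosen traversal direction, its indicator vector $n^{\mathcal{C}}\in\{0,\pm1\}^E$ has $n^{\mathcal{C}}_e=0$ if $e$ is not in the cycle, $+1$ if $e$ is directed along the traversal direction, and $-1$ otherwise. A meshed graph has $C=E-N+1$ independent cycles; $\mathbf{N}\in\mathbb{R}^{E\times C}$ is obtained by stacking as columns the indicator vectors of $C$ independent cycles, so that $\operatorname{null}(A^\top)=\operatorname{range}(\mathbf{N})$. *)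

(* Defs.v *)
From HB Require Import structures.
From mathcomp Require Import all_boot all_order all_algebra.
Set Implicit Arguments. Unset Strict Implicit. Unset Printing Implicit Defensive.
Import Order.TTheory GRing.Theory Num.Theory.
Local Open Scope ring_scope.

(* A (multi)graph with nodes 'I_N and edges 'I_E; edge e is given the
   (arbitrary) direction e = (src e, dst e). *)

Definition incidence (R : ringType) (N E : nat) (src dst : 'I_E -> 'I_N)
  : 'M[R]_(E, N) :=
  \matrix_(e < E, k < N) ((k == src e)%:R - (k == dst e)%:R).

Definition adj (N E : nat) (src dst : 'I_E -> 'I_N) : rel 'I_N :=
  fun u v => [exists e, ((src e == u) && (dst e == v)) || ((src e == v) && (dst e == u))].

Definition connected_graph (N E : nat) (src dst : 'I_E -> 'I_N) : Prop :=
  forall u v : 'I_N, connect (adj src dst) u v.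

Definition no_self_loops (N E : nat) (src dst : 'I_E -> 'I_N) : Prop :=
  forall e, src e != dst e.

(* A cycle with a chosen traversal direction: a nonempty sequence of
   traversed edges (e, b), b = true meaning e is traversed along its direction
   (from src e to dst e); edges are pairwise distinct, and consecutive edges
   are adjacent (end node of one = start node of the next), cyclically. *)
Definition tstart (N E : nat) (src dst : 'I_E -> 'I_N) (eb : 'I_E * bool) :=
  if eb.2 then src eb.1 else dst eb.1.
Definition tend (N E : nat) (src dst : 'I_E -> 'I_N) (eb : 'I_E * bool) :=
  if eb.2 then dst eb.1 else src eb.1.

Definition is_cycle (N E : nat) (src dst : 'I_E -> 'I_N) (s : seq ('I_E * bool))
  : Prop :=
  [/\ s != [::], uniq (map fst s) &
      path.cycle (fun a b => tend src dst a == tstart src dst b) s].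

Definition cycle_indicator (R : ringType) (E : nat) (s : seq ('I_E * bool))
  : 'cV[R]_E :=
  \col_(e < E) (if (e, true) \in s then 1 else if (e, false) \in s then -1 else 0).

Definition has_cycle (N E : nat) (src dst : 'I_E -> 'I_N) : Prop :=
  exists s, is_cycle src dst s.

Definition is_cycle_matrix (R : fieldType) (N E : nat) (src dst : 'I_E -> 'I_N)
  (Nm : 'M[R]_(E, (E.+1 - N)%N)) : Prop :=
  \rank Nm = (E.+1 - N)%N /\
  forall j, exists s, is_cycle src dst s /\ col j Nm = cycle_indicator R s.

Definition dc_pf (R : ringType) (N E : nat) (src dst : 'I_E -> 'I_N)
  (x : 'cV[R]_E) (p : 'cV[R]_N) (r : 'I_N) (thr : R)
  (f : 'cV[R]_E) (th : 'cV[R]_N) : Prop :=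
  [/\ (incidence R src dst)^T *m f = p,
      diag_mx x^T *m f = incidence R src dst *m th &
      th r 0 = thr].

(* Main.v *)
Require Import Defs.
From HB Require Import structures.
From mathcomp Require Import all_boot all_order all_algebra.
Import Order.TTheory GRing.Theory Num.Theory.
From mathcomp Require Import zify.
From Stdlib Require Import Classical.
Set Implicit Arguments. Unset Strict Implicit.
Local Open Scope ring_scope.
Lemma sum_delta (R : ringType) N (a : 'I_N) (F : 'I_N -> R) :
  \sum_k (k == a)%:R * F k = F a.
Proof.
rewrite (bigD1 a) //= eqxx mul1r big1 ?addr0 // => k /negbTE ->; by rewrite mul0r.
Qed.

Lemma inc_mul (R : ringType) N E (src dst : 'I_E -> 'I_N) (th : 'cV[R]_N) e :
  (incidence R src dst *m th) e 0 = th (src e) 0 - th (dst e) 0.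
Proof.
rewrite mxE.
under eq_bigr => k _ do rewrite mxE mulrBl.
by rewrite sumrB !sum_delta.
Qed.

Lemma conn_const (R : ringType) N E (src dst : 'I_E -> 'I_N) (th : 'cV[R]_N) :
  connected_graph src dst -> incidence R src dst *m th = 0 ->
  forall u v, th u 0 = th v 0.
Proof.
move=> Hc HA.
have Hadj : forall u v, adj src dst u v -> th u 0 = th v 0.
  have He : forall e, th (src e) 0 = th (dst e) 0.
    move=> e; have := @inc_mul _ _ _ src dst th e.
    by rewrite HA mxE => /eqP; rewrite eq_sym subr_eq0 => /eqP.
  move=> u v /existsP[e /orP[/andP[/eqP<- /eqP<-]|/andP[/eqP<- /eqP<-]]] //.
move=> u v; have /connectP[q pq ->] := Hc u v.
elim: q u pq => [//|w q IH] u /= /andP[a pq].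
by rewrite (Hadj _ _ a) IH.
Qed.

Lemma path_belast N E (src dst : 'I_E -> 'I_N) x p :
  path (fun a b => tend src dst a == tstart src dst b) x p ->
  map (tend src dst) (belast x p) = map (tstart src dst) p.
Proof.
elim: p x => [//|y p IH] x /= /andP[/eqP -> H]; by rewrite IH.
Qed.

Definition sgb (R : ringType) (b : bool) : R := if b then 1 else -1.

Lemma ind_sum (R : ringType) E (s : seq ('I_E * bool)) e :
  uniq (map fst s) ->
  cycle_indicator R s e 0 = \sum_(a <- s) (a.1 == e)%:R * sgb R a.2.
Proof.
rewrite mxE; elim: s => [|a s IH]; first by rewrite big_nil.
rewrite /= big_cons => /andP[Ha Hu]; rewrite -IH // !inE.
case: a Ha => e' b /= Ha.
case: (eqVneq e' e) => [<-|ne].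
  have Hn : forall b', ((e', b') \in s) = false.
    move=> b'; apply/negbTE; apply: contra Ha => H.
    by apply/mapP; exists (e', b').
  rewrite !Hn; case: b; rewrite !xpair_eqE !eqxx /= /sgb ?mulr1n ?mul1r ?addr0 // ?orbF.
by rewrite !xpair_eqE eq_sym (negbTE ne) /= mul0r add0r.
Qed.

Lemma cycle_ker (R : ringType) N E (src dst : 'I_E -> 'I_N) s :
  is_cycle src dst s ->
  (incidence R src dst)^T *m cycle_indicator R s = 0.
Proof.
case=> ne Hu Hc; apply/matrixP => k j; rewrite ord1 [RHS]mxE mxE.
under eq_bigr => e _ do rewrite mxE (ind_sum _ _ Hu) mulr_sumr.
rewrite exchange_big /=.
under eq_bigr => a _.
  rewrite (bigD1 a.1) //= eqxx mul1r big1 ?addr0; last first.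
    by move=> e /negbTE; rewrite eq_sym => ->; rewrite mul0r mulr0.
  rewrite mxE.
  have -> : ((k == src a.1)%:R - (k == dst a.1)%:R) * sgb R a.2 =
     (k == tstart src dst a)%:R - (k == tend src dst a)%:R.
    by rewrite /tstart /tend /sgb; case: a.2; rewrite ?mulr1 ?mulrN1 ?opprB.
  over.
rewrite sumrB; apply/eqP; rewrite subr_eq0; apply/eqP.
rewrite -(big_map (tstart src dst) xpredT (fun y => (k == y)%:R)).
rewrite -(big_map (tend src dst) xpredT (fun y => (k == y)%:R)).
apply: perm_big.
case: s ne Hc {Hu} => [//|a s] _ /= Hc.
have := path_belast Hc; rewrite belast_rcons /= => ->.
by rewrite map_rcons perm_sym perm_rcons.
Qed.


Lemma sup_rank (F : fieldType) m1 m2 n (A : 'M[F]_(m1,n)) (B : 'M_(m2,n)) :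
  (A <= B)%MS -> (\rank B <= \rank A)%N -> (B <= A)%MS.
Proof.
move=> sAB hr; case: (mxrank_leqif_sup sAB) => _ <-.
by rewrite eqn_leq mxrankS.
Qed.

Theorem proposition1 (R : realFieldType) (N E : nat) (src dst : 'I_E -> 'I_N)
  (Nm : 'M[R]_(E, (E.+1 - N)%N))
  (x : 'cV[R]_E) (p : 'cV[R]_N) (r : 'I_N) (thr : R) :
  no_self_loops src dst ->
  connected_graph src dst ->
  is_cycle_matrix src dst Nm ->
  \sum_(k < N) p k 0 = 0 ->
  ((exists f th, dc_pf src dst x p r thr f th) /\
   (forall f1 th1 f2 th2, dc_pf src dst x p r thr f1 th1 ->
      dc_pf src dst x p r thr f2 th2 -> f1 = f2 /\ th1 = th2))
  <->
  (~ has_cycle src dst \/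
   (has_cycle src dst /\ Nm^T *m diag_mx x^T *m Nm \in unitmx)).
Proof.
move=> Hnl Hc [rkN HNcol] Hp.
rewrite /dc_pf.
set A := incidence R src dst.
set X := diag_mx x^T.
pose one := const_mx 1 : 'cV[R]_N.
set MM := Nm^T *m X *m Nm.
have Aone : forall th : 'cV_N, (forall u, th u 0 = th r 0) -> A *m th = 0.
  move=> th H; apply/matrixP => e j; rewrite ord1 inc_mul !H subrr mxE //.
have Aone1 : A *m one = 0 by apply: Aone => u; rewrite !mxE.
have Hconst : forall th : 'cV_N, A *m th = 0 -> forall u, th u 0 = th r 0.
  by move=> th H u; apply: (conn_const Hc H u r).
have AN : A^T *m Nm = 0.
  apply/matrixP => k j; have [s [Hs Hcol]] := HNcol j.
  have := @cycle_ker R _ _ src dst s Hs; rewrite -Hcol => /matrixP/(_ k 0).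
  rewrite !mxE => H; apply: (eq_trans _ H); apply: eq_bigr => e _; rewrite !mxE //.
have rkA : (N - 1 <= \rank A)%N.
  have sub1 : (kermx A^T <= (const_mx 1 : 'rV[R]_N))%MS.
    apply/row_subP => i; set v := row i (kermx A^T).
    have : (v *m A^T)^T = 0 by rewrite /v -row_mul mulmx_ker row0 trmx0.
    rewrite trmx_mul trmxK => Hv.
    have -> : v = v 0 r *: const_mx 1.
      apply/rowP => u; rewrite !mxE mulr1; have := Hconst _ Hv u; rewrite !mxE //.
    by apply: scalemx_sub; exact: submx_refl.
  have := mxrankS sub1; rewrite mxrank_ker mxrank_tr.
  have := rank_leq_row (const_mx 1 : 'rV[R]_N); lia.
have hNE : (N <= E.+1)%N by have := rank_leq_row A; lia.
have L5 : forall q : 'cV_N, \sum_k q k 0 = 0 -> exists f, A^T *m f = q.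
  move=> q Hq; have s1 : (A <= kermx one)%MS by apply/sub_kermxP.
  have r1 : (\rank (kermx one) <= \rank A)%N.
    rewrite mxrank_ker.
    have : \rank one != 0%N.
      rewrite mxrank_eq0; apply/eqP => /matrixP/(_ r 0); rewrite !mxE.
      by apply/eqP; exact: oner_neq0.
    have := rank_leq_col one; lia.
  have s2 := sup_rank s1 r1.
  have : (q^T <= A)%MS.
    apply: submx_trans s2; apply/sub_kermxP; apply/matrixP => i j.
    rewrite !ord1 !mxE; rewrite -[RHS]Hq; apply: eq_bigr => k _; rewrite !mxE mulr1 //.
  case/submxP => D HD; exists D^T.
  by rewrite -[q]trmxK HD trmx_mul.
have L6 : forall y : 'cV_E, Nm^T *m y = 0 -> exists th, y = A *m th.
  move=> y Hy; have s1 : (A^T <= kermx Nm)%MS by apply/sub_kermxP.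
  have r1 : (\rank (kermx Nm) <= \rank A^T)%N.
    rewrite mxrank_ker rkN mxrank_tr; lia.
  have s2 := sup_rank s1 r1.
  have : (y^T <= A^T)%MS.
    apply: submx_trans s2; apply/sub_kermxP; apply: trmx_inj.
    by rewrite trmx_mul trmxK Hy trmx0.
  case/submxP => D HD; exists D^T.
  by apply: trmx_inj; rewrite trmx_mul trmxK.
have L7 : forall g : 'cV_E, A^T *m g = 0 -> exists c, g = Nm *m c.
  move=> g Hg; have s1 : (Nm^T <= kermx A)%MS.
    by apply/sub_kermxP; apply: trmx_inj; rewrite trmx_mul !trmxK AN trmx0.
  have r1 : (\rank (kermx A) <= \rank Nm^T)%N.
    rewrite mxrank_ker mxrank_tr rkN; have := rank_leq_row A; lia.
  have s2 := sup_rank s1 r1.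
  have : (g^T <= Nm^T)%MS.
    apply: submx_trans s2; apply/sub_kermxP; apply: trmx_inj.
    by rewrite trmx_mul !trmxK Hg trmx0.
  case/submxP => D HD; exists D^T.
  by apply: trmx_inj; rewrite trmx_mul trmxK.
have Ninj : forall c, Nm *m c = 0 -> c = 0 :> 'cV_(E.+1 - N).
  have fr : row_free Nm^T by rewrite /row_free mxrank_tr rkN.
  move=> c Hc0; apply: trmx_inj; rewrite trmx0; apply: (row_free_inj fr).
  by rewrite mul0mx -trmx_mul Hc0 trmx0.
have MMsym : MM^T = MM.
  by rewrite /MM !trmx_mul trmxK /X tr_diag_mx mulmxA.
have Aadd : forall th t : 'cV_N, A *m (th + (t - t r 0 *: one)) = A *m th + A *m t.
  by move=> th t; rewrite mulmxDr mulmxBr -scalemxAr Aone1 scaler0 subr0.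
have radd : forall th t : 'cV_N, (th + (t - t r 0 *: one)) r 0 = th r 0.
  by move=> th t; rewrite !mxE mulr1 subrr addr0.
have key : ((exists f th, [/\ A^T *m f = p, X *m f = A *m th & th r 0 = thr]) /\
   (forall f1 th1 f2 th2, [/\ A^T *m f1 = p, X *m f1 = A *m th1 & th1 r 0 = thr] ->
      [/\ A^T *m f2 = p, X *m f2 = A *m th2 & th2 r 0 = thr] -> f1 = f2 /\ th1 = th2))
   <-> MM \in unitmx.
  split.
    case=> [[f [th [H1 H2 H3]]] Hu].
    case Hunit: (MM \in unitmx) => //; exfalso.
    have Hk : kermx MM != 0 by rewrite kermx_eq0 row_free_unit Hunit.
    case: (pickP (fun i => row i (kermx MM) != 0)) => [i Hi|H0]; last first.
      move: Hk; rewrite (_ : kermx MM = 0) ?eqxx //.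
      apply/row_matrixP => i; have := H0 i; move/negbFE/eqP ->; by rewrite row0.
    set v := row i (kermx MM) in Hi; pose c := v^T.
    have MMc : MM *m c = 0.
      by apply: trmx_inj; rewrite trmx_mul trmxK MMsym /v -row_mul mulmx_ker row0 trmx0.
    have [t Ht] : exists t, X *m (Nm *m c) = A *m t.
      by apply: L6; rewrite !mulmxA -/MM MMc.
    have H2s : [/\ A^T *m (f + Nm *m c) = p, X *m (f + Nm *m c) = A *m (th + (t - t r 0 *: one))
        & (th + (t - t r 0 *: one)) r 0 = thr].
      split.
      - by rewrite mulmxDr mulmxA AN mul0mx addr0.
      - by rewrite Aadd mulmxDr H2 Ht.
      - by rewrite radd.
    have [Hf _] := Hu _ _ _ _ (And3 H1 H2 H3) H2s.
    have : Nm *m c = 0.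
      by apply: (addrI f); rewrite addr0 -Hf.
    move/Ninj => c0; move: Hi; rewrite -[v]trmxK -/c c0 trmx0 eqxx //.
  move=> Hunit; split; last first.
    move=> f1 th1 f2 th2 [H1 H2 H3] [H1' H2' H3'].
    have [c Hc0] : exists c, f1 - f2 = Nm *m c.
      by apply: L7; rewrite mulmxBr H1 H1' subrr.
    have HXt : X *m (f1 - f2) = A *m (th1 - th2) by rewrite !mulmxBr H2 H2'.
    have MMc : MM *m c = 0.
      rewrite /MM -!mulmxA -Hc0 HXt mulmxA.
      have -> : Nm^T *m A = 0 by apply: trmx_inj; rewrite trmx_mul trmxK AN trmx0.
      by rewrite mul0mx.
    have c0 : c = 0 by rewrite -(mulKmx Hunit c) MMc mulmx0.
    have ef : f1 = f2 by apply/eqP; rewrite -subr_eq0 Hc0 c0 mulmx0.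
    split => //.
    have At : A *m (th1 - th2) = 0 by rewrite -HXt ef subrr mulmx0.
    apply/eqP; rewrite -subr_eq0; apply/eqP/matrixP => u j; rewrite ord1.
    by rewrite (Hconst _ At u) !mxE H3 H3' subrr.
  have [f0 Hf0] := L5 p Hp.
  pose w := Nm^T *m X *m f0.
  pose c := - (invmx MM *m w).
  pose f := f0 + Nm *m c.
  have [th0 Hth0] : exists th0, X *m f = A *m th0.
    apply: L6.
    rewrite /f mulmxDr mulmxDr !mulmxA -/w -/MM /c mulmxN (mulKVmx Hunit).
    by rewrite subrr.
  exists f, (th0 + (thr - th0 r 0) *: one); split.
  - by rewrite /f mulmxDr mulmxA AN mul0mx addr0.
  - by rewrite Hth0 mulmxDr -scalemxAr Aone1 scaler0 addr0.
  - by rewrite !mxE mulr1 addrC subrK.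
rewrite key; split.
  move=> Hunit; case: (classic (has_cycle src dst)) => Hcy; [right | left] => //.
case=> [Hnc | [_ //]].
have C0 : (E.+1 - N)%N = 0%N.
  case: (posnP (E.+1 - N)) => // Cpos; exfalso; apply: Hnc.
  have [s [Hs _]] := HNcol (Ordinal Cpos); by exists s.
rewrite -row_free_unit /row_free.
have := rank_leq_row MM; move: C0; lia.
Qed.
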